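(* Let $a,b,d$ be positive integers, $V = \mathbb{C}^a \oplus \mathbb{C}^b$ with basis $e_1,\ldots,e_a$ of $\mathbb{C}^a$ and $f_1,\ldots,f_b$ of $\mathbb{C}^b$, and $W = \bigotimes^d V$. Let the symmetric group $\mathfrak{S}_a$ act on $V$ by permuting $e_1,\ldots,e_a$ (i.e. via permutation matrices on $\mathbb{C}^a$) and trivially on $\mathbb{C}^b$, and diagonally on $W$. For $1\le i\le a$ let $\zeta_{i,b}:V\to V$ be the linear map with $\zeta_{i,b}(e_i)=f_b$ vanishing on all other basis vectors, and let $\varphi_{i,b}:W\to W$ be the linear map defined on basis tensors ($v_k\in\{e_1,\ldots,e_a,f_1,\ldots,f_b\}$) by \[ \varphi_{i,b}(v_1\otimes\cdots\otimes v_d) = \tfrac{1}{d}\sum_{k=1}^d v_1\otimes\cdots\otimes v_{k-1}\otimes \zeta_{i,b}(v_k)\otimes v_{k+1}\otimes\cdots\otimes v_d . \] Then the composition $\varphi_{1,b}\circ\varphi_{2,b}\circ\cdots\circ\varphi_{a,b}:W\to W$ maps $\mathfrak{S}_a$-invariant tensors to $\mathfrak{S}_a$-invariant tensors. *)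

(* Defs.v *)
From HB Require Import structures.
From mathcomp Require Import all_boot all_algebra all_fingroup.
From mathcomp Require Import reals complex.
Set Implicit Arguments. Unset Strict Implicit. Unset Printing Implicit Defensive.
Import GRing.Theory Num.Theory.
Local Open Scope ring_scope.

Section Defs.
Variables (K : fieldType) (a b d : nat).

(* Basis of V = K^a (+) K^b : inl i = e_(i+1), inr j = f_(j+1). *)
Definition bidx := ('I_a + 'I_b)%type.
Definition vec := {ffun bidx -> K}.
Definition unitv (k : bidx) : vec := [ffun l : bidx => (l == k)%:R].
(* Basis tensors of W = (x)^d V are indexed by d-tuples of basis indices;
   a tensor is its coordinate function in this basis. *)
Definition tidx := {ffun 'I_d -> bidx}.
Definition tens := {ffun tidx -> K}.
Definition btens (w : tidx) : tens := [ffun u : tidx => (u == w)%:R].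
Definition pure (x : 'I_d -> vec) : tens := [ffun u : tidx => \prod_(k < d) x k (u k)].
Definition linext (F : tidx -> tens) (T : tens) : tens :=
  [ffun u : tidx => \sum_(w : tidx) T w * F w u].

Definition zeta (i : 'I_a) (j : 'I_b) (k : bidx) : vec :=
  if k == inl i then unitv (inr j) else 0.
Definition phi_basis (i : 'I_a) (j : 'I_b) (w : tidx) : tens :=
  [ffun u : tidx => d%:R^-1 * \sum_(k < d)
     pure (fun l => if l == k then zeta i j (w l) else unitv (w l)) u].
Definition phi (i : 'I_a) (j : 'I_b) : tens -> tens := linext (phi_basis i j).

(* phi_{1,j} o phi_{2,j} o ... o phi_{a,j}  (indices shifted by one) *)
Definition phi_comp (j : 'I_b) (T : tens) : tens :=
  foldr (fun i S => phi i j S) T (enum 'I_a).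

Definition perm_bidx (s : {perm 'I_a}) (k : bidx) : bidx :=
  match k with inl i => inl (s i) | inr j => inr j end.
Definition act (s : {perm 'I_a}) : tens -> tens :=
  linext (fun w => btens [ffun l : 'I_d => perm_bidx s (w l)]).
Definition Sa_invariant (T : tens) : Prop := forall s : {perm 'I_a}, act s T = T.
End Defs.

(* Main.v *)
Require Import Defs.
From mathcomp Require Import all_boot all_algebra all_fingroup.
From mathcomp Require Import reals complex.
Set Implicit Arguments. Unset Strict Implicit. Unset Printing Implicit Defensive.
Import GRing.Theory.
Local Open Scope ring_scope.

Section Aux.
Variables (K : fieldType) (a b d : nat).

Definition upd (w : tidx a b d) (k : 'I_d) (x : bidx a b) : tidx a b d :=
  [ffun l => if l == k then x else w l].

Lemma prod_ind (u v : tidx a b d) :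
  \prod_(l < d) ((u l == v l)%:R : K) = (u == v)%:R.
Proof.
case: (eqVneq u v) => [->|Hne].
  by rewrite big1 // => l _; rewrite eqxx.
have: ~~ [forall l, u l == v l].
  apply: contra Hne => /forallP H; apply/eqP/ffunP => l; exact/eqP.
move/forallPn => [l Hl].
by rewrite (bigD1 l) //= (negbTE Hl) mul0r.
Qed.

Lemma pbE (i : 'I_a) (j : 'I_b) (w u : tidx a b d) :
  phi_basis K i j w u = d%:R^-1 * \sum_(k < d)
     ((w k == inl i)%:R * (u == upd w k (inr j))%:R).
Proof.
rewrite /phi_basis ffunE; congr (_ * _); apply: eq_bigr => k _.
rewrite /pure ffunE -prod_ind (bigD1 k) //= [in RHS](bigD1 k) //= eqxx.
rewrite /upd ffunE eqxx mulrA; congr (_ * _).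
  rewrite /zeta; case: eqP => _; rewrite !ffunE ?mul1r ?mul0r //.
apply: eq_bigr => l /negbTE Hl; by rewrite Hl !ffunE Hl.
Qed.

Lemma sum_ind (F : tidx a b d -> K) c :
  \sum_w F w * (w == c)%:R = F c.
Proof.
rewrite (bigD1 c) //= eqxx mulr1 big1 ?addr0 // => w /negbTE ->; exact: mulr0.
Qed.

Definition sig (s : {perm 'I_a}) (w : tidx a b d) : tidx a b d :=
  [ffun l => perm_bidx s (w l)].

Lemma pbK (s : {perm 'I_a}) (x : bidx a b) : perm_bidx s^-1 (perm_bidx s x) = x.
Proof. by case: x => //= i; rewrite permK. Qed.

Lemma pbKV (s : {perm 'I_a}) (x : bidx a b) : perm_bidx s (perm_bidx s^-1 x) = x.
Proof. by case: x => //= i; rewrite permKV. Qed.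

Lemma sigK (s : {perm 'I_a}) : cancel (sig s) (sig s^-1).
Proof. by move=> w; apply/ffunP => l; rewrite !ffunE pbK. Qed.

Lemma sigKV (s : {perm 'I_a}) : cancel (sig s^-1) (sig s).
Proof. by move=> w; apply/ffunP => l; rewrite !ffunE pbKV. Qed.

Lemma actE (s : {perm 'I_a}) (T : tens K a b d) u : Defs.act s T u = T (sig s^-1 u).
Proof.
rewrite /Defs.act /linext ffunE -(sum_ind T); apply: eq_bigr => w _.
rewrite /btens ffunE; congr (_ * _%:R).
rewrite -[u in LHS](sigKV s) (inj_eq (can_inj (sigK s))); by rewrite eq_sym.
Qed.

Lemma perm_bidx_inl (s : {perm 'I_a}) (x : bidx a b) i : (perm_bidx s x == inl (s i)) = (x == inl i).
Proof.
case: x => [k|k] //=; apply/eqP/eqP => [[]|[]->] //.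
by move/perm_inj => ->.
Qed.

Lemma sig_upd (s : {perm 'I_a}) (w : tidx a b d) m (j : 'I_b) :
  sig s^-1 (upd (sig s w) m (inr j)) = upd w m (inr j).
Proof.
apply/ffunP => l; rewrite !ffunE; case: eqP => _ //; by rewrite ?ffunE ?pbK.
Qed.

Lemma pb_equiv (s : {perm 'I_a}) i (j : 'I_b) (w u : tidx a b d) :
  phi_basis K (s i) j (sig s w) u = phi_basis K i j w (sig s^-1 u).
Proof.
rewrite !pbE; congr (_ * _); apply: eq_bigr => m _.
rewrite ffunE perm_bidx_inl; congr (_ * _%:R).
by rewrite -(sig_upd s w) (inj_eq (can_inj (sigKV s))).
Qed.

Lemma phi_equiv (s : {perm 'I_a}) i (j : 'I_b) (T : tens K a b d) : Defs.act s (phi i j T) = phi (s i) j (Defs.act s T).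
Proof.
apply/ffunP => u; rewrite actE /phi /linext !ffunE.
rewrite [RHS](reindex_inj (can_inj (sigK s))) /=.
apply: eq_bigr => w _; by rewrite actE sigK pb_equiv.
Qed.

Lemma upd_same (w : tidx a b d) k x : upd w k x k = x.
Proof. by rewrite ffunE eqxx. Qed.
Lemma upd_other (w : tidx a b d) k x l : l != k -> upd w k x l = w l.
Proof. by rewrite ffunE => /negbTE ->. Qed.
Lemma upd_comm (v : tidx a b d) x y c : x != y -> upd (upd v x c) y c = upd (upd v y c) x c.
Proof.
move=> Hxy; apply/ffunP => l; rewrite !ffunE.
by case: (l == y); case: (l == x).
Qed.

Definition C (i k : 'I_a) (j : 'I_b) (v u : tidx a b d) := \sum_w phi_basis K k j v w * phi_basis K i j w u.

Lemma CE i k j v u : C i k j v u = d%:R^-1 * (d%:R^-1 * \sum_(x < d) \sum_(y < d)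
  ((v x == inl k)%:R * (upd v x (inr j) y == inl i)%:R *
   (u == upd (upd v x (inr j)) y (inr j))%:R)).
Proof.
rewrite /C.
under eq_bigr do rewrite pbE -mulrA mulr_suml.
rewrite -mulr_sumr exchange_big /=; congr (_ * _).
have H : forall x : 'I_d, \sum_(w : tidx a b d) (v x == inl k)%:R * (w == upd v x (inr j))%:R *
   phi_basis K i j w u = (v x == inl k)%:R * phi_basis K i j (upd v x (inr j)) u.
  move=> x; rewrite -(sum_ind (fun w => (v x == inl k)%:R * phi_basis K i j w u)).
  by apply: eq_bigr => w _; rewrite mulrAC.
under eq_bigr do rewrite H pbE.
rewrite mulr_sumr; apply: eq_bigr => x _; rewrite mulrCA; congr (_ * _); rewrite mulr_sumr; apply: eq_bigr => y _; by rewrite mulrA.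
Qed.

Lemma C_sym i k j v u : C i k j v u = C k i j v u.
Proof.
rewrite !CE [in RHS]exchange_big /=; do 2 congr (_ * _).
apply: eq_bigr => x _; apply: eq_bigr => y _.
case: (eqVneq x y) => [->|Hxy]; first by rewrite !upd_same !mulr0 !mul0r.
rewrite upd_other ?(negbT (Hxy)) // 1?eq_sym // upd_other // upd_comm //.
congr (_ * _); by rewrite mulrC [inl k == _]eq_sym.
Qed.

Lemma phi_comm i k j (T : tens K a b d) : phi i j (phi k j T) = phi k j (phi i j T).
Proof.
have H : forall i k, phi i j (phi k j T) = [ffun u => \sum_v T v * C i k j v u].
  move=> i' k'; apply/ffunP => u; rewrite /phi /linext !ffunE.
  under eq_bigr do rewrite ffunE mulr_suml.
  rewrite exchange_big /=; apply: eq_bigr => v _; rewrite /C mulr_sumr.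
  by apply: eq_bigr => w _; rewrite mulrA.
by rewrite !H; apply/ffunP => u; rewrite !ffunE; apply: eq_bigr => v _; rewrite C_sym.
Qed.

End Aux.

Section Fold.
Variables (I : eqType) (X : Type) (f : I -> X -> X).
Hypothesis fC : forall x y t, f x (f y t) = f y (f x t).

Lemma foldr_rem t x s : x \in s -> foldr f t s = f x (foldr f t (rem x s)).
Proof.
elim: s => //= y s IH; rewrite in_cons; case: (eqVneq y x) => [->|Hne] //= Hx.
by rewrite IH // fC.
Qed.

Lemma foldr_perm t s1 s2 : perm_eq s1 s2 -> foldr f t s1 = foldr f t s2.
Proof.
elim: s1 s2 => [|x s1 IH] s2 Hp.
  by rewrite perm_sym in Hp; move/perm_nilP: Hp => ->.
have Hx : x \in s2 by rewrite -(perm_mem Hp) mem_head.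
rewrite (foldr_rem t Hx) /=; congr (f x _); apply: IH.
by rewrite -(perm_cons x) (perm_trans Hp) // perm_to_rem.
Qed.
End Fold.

Lemma act_fold (K : fieldType) a b d (s : {perm 'I_a}) (j : 'I_b) (T : tens K a b d) l :
  Defs.act s (foldr (fun i S => phi i j S) T l) =
  foldr (fun i S => phi i j S) (Defs.act s T) (map s l).
Proof. by elim: l => //= i l IH; rewrite phi_equiv IH. Qed.

Theorem claim3p1 (R : realType) (a b d : nat)
  (ha : (0 < a)%N) (hb : (0 < b)%N) (hd : (0 < d)%N)
  (j : 'I_b) (hj : nat_of_ord j = b.-1) (T : tens R[i] a b d) :
  Sa_invariant T -> Sa_invariant (phi_comp j T).
Proof.
move=> HT s; rewrite /phi_comp act_fold HT.
apply: foldr_perm; first by move=> x y t; exact: phi_comm.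
apply: uniq_perm; first by rewrite (map_inj_uniq perm_inj) enum_uniq.
  exact: enum_uniq.
move=> x; rewrite mem_enum; apply/mapP; exists ((s^-1)%g x); by rewrite ?mem_enum ?permKV.
Qed.
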